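(* Let $W$ be a skew-symmetric weighing matrix of order $n\equiv 0\pmod 4$ and weight $m\equiv 3\pmod 8$, i.e. an $n\times n$ matrix with entries in $\{0,1,-1\}$ satisfying $W^T=-W$ and $WW^T=mI$. Let $\tilde{C}_4(W)$ be the $\mathbb{Z}_4$-code of length $2n$ with generator matrix $(I\ \ W+2I)$, entries read modulo $4$. Let $a,b,c,d$ be integers with $c\equiv 2a+b\pmod 4$ and $d\equiv a+2b\pmod 4$. Then $\tilde{C}_4(W)$ is a Type~II $\mathbb{Z}_4$-code, $A_4(\tilde{C}_4(W))$ is an even unimodular lattice, and the $2n$ rows of the matrix \[ \tilde{F}(W)=\frac{1}{2}\begin{pmatrix} aI+bW & cI+dW\\ -cI+dW & aI-bW\end{pmatrix} \] form a $\frac{1}{4}(a^2+mb^2+c^2+md^2)$-frame of $A_4(\tilde{C}_4(W))$.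
   Context: A $\mathbb{Z}_k$-code of length $N$ is a $\mathbb{Z}_k$-submodule of $\mathbb{Z}_k^N$. A Type~II $\mathbb{Z}_4$-code is a self-dual $\mathbb{Z}_4$-code (equal to its dual under the standard inner product) all of whose codewords have Euclidean weight divisible by $8$, where the Euclidean weight of $x$ is $n_1(x)+4n_2(x)$, with $n_1(x)$ the number of coordinates equal to $\pm1$ and $n_2(x)$ the number equal to $2$. Construction A: with $\rho:\mathbb{Z}_k\to\mathbb{Z}$ sending $0,1,\dots,k-1$ to $0,1,\dots,k-1$, for a $\mathbb{Z}_k$-code $C$ of length $N$ set $A_k(C)=\frac{1}{\sqrt{k}}\{\rho(C)+k\mathbb{Z}^N\}$. For a lattice $L$ in dimension $N$, a set $\{f_1,\dots,f_N\}$ of vectors of $L$ with $(f_i,f_j)=t\,\delta_{i,j}$ is called a $t$-frame of $L$. A lattice $L$ is even unimodular if it equals its dual and all norms $(x,x)$, $x\in L$, are even. *)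

(* Defs.v *)
From HB Require Import structures.
From mathcomp Require Import all_boot all_order all_algebra.
From mathcomp Require Import reals.
Set Implicit Arguments. Unset Strict Implicit. Unset Printing Implicit Defensive.
Import Order.TTheory GRing.Theory Num.Theory.
Local Open Scope ring_scope.

Definition code_gen (k r N : nat) (G : 'M['Z_k]_(r, N)) : {set 'rV['Z_k]_N} :=
  [set u *m G | u : 'rV['Z_k]_r].

Definition zdot (k N : nat) (x y : 'rV['Z_k]_N) : 'Z_k := (x *m y^T) 0 0.

Definition dual_code (k N : nat) (C : {set 'rV['Z_k]_N}) : {set 'rV['Z_k]_N} :=
  [set x | [forall y in C, zdot x y == 0]].

Definition self_dual (k N : nat) (C : {set 'rV['Z_k]_N}) : Prop :=
  C = dual_code C.

Definition n1 (N : nat) (x : 'rV['Z_4]_N) : nat :=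
  #|[set i : 'I_N | (x 0 i == 1) || (x 0 i == -1)]|.
Definition n2 (N : nat) (x : 'rV['Z_4]_N) : nat :=
  #|[set i : 'I_N | x 0 i == 2%:R]|.
Definition euclid_weight (N : nat) (x : 'rV['Z_4]_N) : nat :=
  (n1 x + 4 * n2 x)%N.

Definition typeII_Z4 (N : nat) (C : {set 'rV['Z_4]_N}) : Prop :=
  self_dual C /\ forall x, x \in C -> (8 %| euclid_weight x)%N.

Section Lattices.
Variable R : realType.

Definition rho (k : nat) (x : 'Z_k) : int := (nat_of_ord x)%:Z.

Definition Ak (k N : nat) (C : {set 'rV['Z_k]_N}) : 'rV[R]_N -> Prop :=
  fun v => exists2 c, c \in C &
    exists z : 'rV[int]_N,
      v = (Num.sqrt (k%:R : R))^-1 *: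
            map_mx (fun t : int => t%:~R : R) (map_mx (@rho k) c + k%:Z *: z).

Definition rdot (N : nat) (x y : 'rV[R]_N) : R := (x *m y^T) 0 0.

Definition dual_lattice (N : nat) (L : 'rV[R]_N -> Prop) : 'rV[R]_N -> Prop :=
  fun y => forall x, L x -> exists z : int, rdot x y = z%:~R.

Definition unimodular (N : nat) (L : 'rV[R]_N -> Prop) : Prop :=
  forall y, L y <-> dual_lattice L y.

Definition even_lattice (N : nat) (L : 'rV[R]_N -> Prop) : Prop :=
  forall x, L x -> exists z : int, rdot x x = (2 * z)%:~R.

Definition even_unimodular (N : nat) (L : 'rV[R]_N -> Prop) : Prop :=
  even_lattice L /\ unimodular L.

Definition is_frame (N : nat) (L : 'rV[R]_N -> Prop) (t : R)
    (f : 'I_N -> 'rV[R]_N) : Prop :=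
  (forall i, L (f i)) /\
  (forall i j, rdot (f i) (f j) = if i == j then t else 0).

End Lattices.
Arguments Ak R {k N} C _.

Definition skew_weighing (n m : nat) (W : 'M[int]_n) : Prop :=
  [/\ forall i j, W i j \in [:: 0; 1; -1],
      W^T = - W &
      W *m W^T = (m%:Z)%:M].

Definition gen_C4 (n : nat) (W : 'M[int]_n) : 'M['Z_4]_(n, n + n) :=
  map_mx (fun t : int => t%:~R : 'Z_4) (row_mx 1%:M (W + 2%:M)).

Definition C4t (n : nat) (W : 'M[int]_n) : {set 'rV['Z_4]_(n + n)} :=
  code_gen (gen_C4 W).

Definition Ft (R : realType) (n : nat) (W : 'M[int]_n) (a b c d : int)
    : 'M[R]_(n + n) :=
  let Wr := map_mx (fun t : int => t%:~R : R) W in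
  (2%:R : R)^-1 *:
    block_mx (a%:~R *: 1%:M + b%:~R *: Wr) (c%:~R *: 1%:M + d%:~R *: Wr)
             (- (c%:~R *: 1%:M) + d%:~R *: Wr) (a%:~R *: 1%:M - b%:~R *: Wr).
Arguments Ft R {n} W a b c d.

(* Main.v *)
Require Import Defs.
From HB Require Import structures.
From mathcomp Require Import all_boot all_order all_algebra.
From mathcomp Require Import reals zify ring lra.
Import Order.TTheory GRing.Theory Num.Theory.
Local Open Scope ring_scope.

Definition c4 (t : int) : 'Z_4 := t%:~R.

Lemma c4_4 : c4 4 = 0. Proof. by apply/eqP. Qed.

Lemma c4_decomp (t : int) : exists q r, t = q * 4 + r /\ (r = 0 \/ r = 1 \/ r = 2 \/ r = 3).
Proof. exists (t %/ 4)%Z, (t %% 4)%Z. split; lia. Qed.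

Lemma c4_mul4 (q r : int) : c4 (q * 4 + r) = c4 r.
Proof. by rewrite /c4 rmorphD rmorphM /= -/(c4 4) c4_4 mulr0 add0r. Qed.

Lemma c4_dvd (t : int) : c4 t = 0 -> (4 %| t)%Z.
Proof.
have [q [r [-> hr]]] := c4_decomp t; rewrite c4_mul4.
case: hr => [->|[->|[->|->]]] h; try by move/eqP: h.
lia.
Qed.

Definition fw (x : 'Z_4) : nat := addn ((x == 1) || (x == -1)) (muln 4 (x == 2%:R)).

Lemma fw_sq (t : int) : (8 %| t * t - (fw (c4 t))%:Z)%Z.
Proof.
have [q [r [-> hr]]] := c4_decomp t; rewrite c4_mul4.
case: hr => [->|[->|[->|->]]]; rewrite /fw /=; lia.
Qed.

Section IntAlg.
Variables (n m : nat) (W : 'M[int]_n).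
Hypothesis hskew : W^T = - W.
Hypothesis hWWt : W *m W^T = (m%:Z)%:M.
Hypothesis hm : (m %% 8 = 3)%N.

Definition jj : int := ((m %/ 8).+1)%:Z.
Lemma hm5 : m%:Z + 5 = 8 * jj.
Proof. rewrite /jj; lia. Qed.

Lemma WW : W *m W = - (m%:Z)%:M.
Proof. by apply/eqP; rewrite -eqr_oppLR -mulmxN -hskew hWWt. Qed.

Definition Gi : 'M[int]_(n, n + n) := row_mx 1%:M (W + 2%:M).

Lemma trZ p q (a : int) (A : 'M[int]_(p, q)) : (a *: A)^T = a *: A^T.
Proof. by apply/matrixP => i k; rewrite !mxE. Qed.

Lemma WtP : (W + 2%:M)^T = - W + 2%:M.
Proof. by rewrite linearD /= hskew tr_scalar_mx. Qed.

Lemma sqW : (- W + 2%:M) *m (W + 2%:M) = (m%:Z + 4)%:M.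
Proof.
rewrite mulmxDl mulmxDr mulNmx mulmxDr WW mul_mx_scalar mul_scalar_mx mul_scalar_mx.
apply/matrixP => i k; rewrite !mxE; case: (i == k) => /=; ring.
Qed.

Lemma GiGt : Gi *m Gi^T = (m%:Z + 5)%:M.
Proof.
rewrite /Gi tr_row_mx mul_row_col WtP tr_scalar_mx mul1mx.
rewrite mulmxDl mulmxDr mulmxDr mulmxN WW mul_mx_scalar mul_scalar_mx mul_scalar_mx.
apply/matrixP => i k; rewrite !mxE; case: (i == k) => /=; ring.
Qed.

Lemma mxDE p q (A B : 'M[int]_(p,q)) i k : (A + B) i k = A i k + B i k.
Proof. by rewrite mxE. Qed.
Lemma mxZE p q (a : int) (A : 'M[int]_(p,q)) i k : (a *: A) i k = a * A i k.
Proof. by rewrite mxE. Qed.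

Definition Lint (w : 'rV[int]_(n + n)) :=
  exists (u : 'rV[int]_n) (z : 'rV[int]_(n + n)), w = u *m Gi + 4 *: z.

Lemma Lint_mul (u : 'rV[int]_n) (w : 'rV[int]_(n + n)) (z : 'rV[int]_(n+n)) :
  (u *m Gi + 4 *: z) *m w^T =
  u *m (Gi *m w^T) + 4 *: (z *m w^T).
Proof. by rewrite mulmxDl -scalemxAl mulmxA. Qed.

Lemma Lint_dot w w' : Lint w -> Lint w' -> (4 %| (w *m w'^T) ord0 ord0)%Z.
Proof.
move=> [u [z ->]] [u' [z' ->]].
rewrite Lint_mul linearD /= trZ trmx_mul mulmxDr mulmxA GiGt -scalemxAr.
rewrite mul_scalar_mx !mulmxDr -!scalemxAr !scalemxAl.
rewrite -!scalemxAl !mxDE !mxZE !mxDE !mxZE hm5.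
lia.
Qed.


Lemma tr11 p q (a : 'rV[int]_p) (M : 'M[int]_(p, q)) (b : 'rV[int]_q) :
  (a *m (M *m b^T)) ord0 ord0 = (b *m (M^T *m a^T)) ord0 ord0.
Proof.
have -> : b *m (M^T *m a^T) = (a *m (M *m b^T))^T by rewrite !trmx_mul trmxK mulmxA.
by rewrite [RHS]mxE.
Qed.

Lemma Lint_norm w : Lint w -> (8 %| (w *m w^T) ord0 ord0)%Z.
Proof.
move=> [u [z ->]].
rewrite Lint_mul linearD /= trZ trmx_mul mulmxDr mulmxA GiGt -scalemxAr.
rewrite mul_scalar_mx !mulmxDr -!scalemxAr !scalemxAl.
rewrite -!scalemxAl !mxDE !mxZE !mxDE !mxZE hm5 (@tr11 _ _ z).
rewrite trmxK. set B := (u *m (Gi *m z^T)) ord0 ord0. set C := (z *m z^T) ord0 ord0. set A := (u *m u^T) ord0 ord0. lia.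
Qed.

Lemma Lint_of_dual (k : 'rV[int]_(n + n)) :
  (forall i, (4 %| (k *m Gi^T) ord0 i)%Z) -> Lint k.
Proof.
move=> hk.
pose z0 := \row_i (((k *m Gi^T) ord0 i) %/ 4)%Z.
have hz0 : k *m Gi^T = 4 *: z0.
  apply/matrixP => i l; rewrite mxZE /z0 [X in _ = _ * X]mxE (ord1 i) mulrC divzK //.
set k1 := lsubmx k; set k2 := rsubmx k.
have hk12 : k = row_mx k1 k2 by rewrite hsubmxK.
have hk1 : k1 = 4 *: z0 - k2 *m (- W + 2%:M).
  by rewrite -hz0 hk12 /Gi tr_row_mx mul_row_col WtP tr_scalar_mx mulmx1 addrK.
exists k1, (row_mx 0 ((2 * jj) *: k2 - z0 *m (W + 2%:M))).
rewrite [LHS]hk12 /Gi mul_mx_row mulmx1 scale_row_mx add_row_mx scaler0 addr0.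
congr row_mx.
rewrite hk1 mulmxBl -mulmxA sqW -scalemxAl mul_mx_scalar.
move: (z0 *m (W + 2%:M)) => Z1; apply/matrixP => i l; rewrite !mxE.
have e : (m%:Z) = 8 * jj - 5 by have := hm5; lia.
rewrite e; ring.
Qed.


Lemma c4_lift (x : 'Z_4) : c4 (x : nat)%:Z = x.
Proof. by rewrite /c4 -pmulrn natr_Zp. Qed.

Definition lift4 {p q} (x : 'M['Z_4]_(p, q)) : 'M[int]_(p, q) :=
  map_mx (fun a : 'Z_4 => (a : nat)%:Z) x.

Lemma map_lift4 {p q} (x : 'M['Z_4]_(p, q)) : map_mx c4 (lift4 x) = x.
Proof. by apply/matrixP => i l; rewrite !mxE c4_lift. Qed.

Lemma c4M {p q r} (A : 'M[int]_(p, q)) (B : 'M[int]_(q, r)) :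
  map_mx c4 (A *m B) = map_mx c4 A *m map_mx c4 B.
Proof. by rewrite /c4 map_mxM. Qed.

Lemma c4_0 (t : int) : (4 %| t)%Z -> c4 t = 0.
Proof. by move/dvdzP => [q ->]; rewrite -[q * 4]addr0 c4_mul4. Qed.

Lemma inC (x : 'rV['Z_4]_(n + n)) :
  x \in C4t W <-> exists u : 'rV[int]_n, x = map_mx c4 (u *m Gi).
Proof.
split.
  case/imsetP => u _ ->; exists (lift4 u).
  by rewrite c4M map_lift4.
by move=> [u ->]; rewrite c4M; apply/imsetP; exists (map_mx c4 u).
Qed.

Lemma c4_Lint (w : 'rV[int]_(n + n)) : map_mx c4 w \in C4t W <-> Lint w.
Proof.
split.
  move/inC => [u hu]; exists u.
  pose z := \matrix_(i, l) (((w - u *m Gi) i l) %/ 4)%Z.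
  exists z; apply/matrixP => i l.
  rewrite mxDE mxZE /z [X in _ = _ + _ * X]mxE mulrC divzK.
    by rewrite -mxDE addrC subrK.
  apply: (c4_dvd ((w - u *m Gi) i l)).
  clear z; move: (u *m Gi) hu => P /matrixP /(_ i l).
  by rewrite /c4 !mxE rmorphB /= => ->; rewrite subrr.
move=> [u [z ->]]; apply/inC; exists u.
move: (u *m Gi) => P; apply/matrixP => i l.
by rewrite [LHS]mxE [RHS]mxE mxDE mxZE addrC [4 * _]mulrC c4_mul4.
Qed.

Lemma zdot_c4 (w w' : 'rV[int]_(n + n)) :
  zdot (map_mx c4 w) (map_mx c4 w') = c4 ((w *m w'^T) ord0 ord0).
Proof.
rewrite /zdot; have -> : (map_mx c4 w')^T = map_mx c4 w'^T by apply/matrixP => i l; rewrite !mxE.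
by rewrite -c4M mxE. Qed.

Lemma rowT_entry p q (k : 'rV[int]_q) (M : 'M[int]_(p, q)) i :
  (k *m (row i M)^T) ord0 ord0 = (k *m M^T) ord0 i.
Proof. by rewrite !mxE; apply: eq_bigr => l _; rewrite !mxE. Qed.

Lemma selfdual : self_dual (C4t W).
Proof.
rewrite /self_dual /dual_code; apply/setP => x; rewrite inE.
apply/idP/idP.
  move=> hx; apply/forall_inP => y hy; apply/eqP.
  have hx' : Lint (lift4 x) by apply/c4_Lint; rewrite map_lift4.
  have hy' : Lint (lift4 y) by apply/c4_Lint; rewrite map_lift4.
  rewrite -(map_lift4 x) -(map_lift4 y) zdot_c4; apply: c4_0.
  exact: Lint_dot.
move/forall_inP => h.
rewrite -(map_lift4 x); apply/c4_Lint; apply: Lint_of_dual => i.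
have hy : map_mx c4 (row i Gi) \in C4t W.
  by apply/c4_Lint; exists (delta_mx 0 i), 0; rewrite scaler0 addr0 rowE.
have := h _ hy; rewrite -{1}(map_lift4 x) zdot_c4 => /eqP /c4_dvd.
by rewrite rowT_entry.
Qed.

Lemma card_sum N (P : pred 'I_N) : #|[set i | P i]| = (\sum_i P i)%N.
Proof.
rewrite -[LHS]muln1 -sum_nat_cond_const big_mkcond /=.
by apply: eq_bigr => i _; case: (P i).
Qed.

Lemma ew_sum N (x : 'rV['Z_4]_N) : euclid_weight x = (\sum_i fw (x ord0 i))%N.
Proof.
rewrite /euclid_weight /n1 /n2 /fw !card_sum big_split /= big_distrr /=.
by [].
Qed.

Lemma weight8 x : x \in C4t W -> (8 %| euclid_weight x)%N.
Proof.
move=> hx.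
have hw : Lint (lift4 x) by apply/c4_Lint; rewrite map_lift4.
have h1 := Lint_norm (lift4 x) hw.
set w := lift4 x in hw h1.
have hxw : forall i, x ord0 i = c4 (w ord0 i).
  by move=> i; rewrite /w -[in LHS](map_lift4 x) mxE.
have h2 : (8 %| \sum_i (w ord0 i * w ord0 i - (fw (c4 (w ord0 i)))%:Z))%Z.
  apply: (big_ind (fun t => 8 %| t)%Z) => //.
    by move=> s t hs ht; lia.
  by move=> i _; apply: fw_sq.
have h3 : (euclid_weight x)%:Z = (w *m w^T) ord0 ord0 -
     \sum_i (w ord0 i * w ord0 i - (fw (c4 (w ord0 i)))%:Z).
  rewrite ew_sum sumrB mxE.
  rewrite (big_morph Posz PoszD (erefl 0%:Z)).
  have -> : \sum_j w ord0 j * w^T j ord0 = \sum_i w ord0 i * w ord0 i.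
    by apply: eq_bigr => i _; rewrite [w^T _ _]mxE.
  rewrite opprB addrC subrK.
  by apply: eq_bigr => i _; rewrite hxw.
have : (8 %| (euclid_weight x)%:Z)%Z by rewrite h3; lia.
by [].
Qed.

Definition SW (x y : int) : 'M[int]_n := x%:M + y *: W.

Lemma SW_mul x y x' y' : SW x y *m SW x' y' = SW (x * x' - m%:Z * y * y') (x * y' + y * x').
Proof.
rewrite /SW mulmxDl !mulmxDr !mul_scalar_mx -!scalemxAl mul_mx_scalar -scalemxAr WW.
apply/matrixP => i k; rewrite !mxE; case: (i == k) => /=; rewrite ?mulr1n ?mulr0n; ring.
Qed.

Lemma SW_tr x y : (SW x y)^T = SW x (- y).
Proof.
apply/matrixP => i k; rewrite /SW !mxE.
have := congr1 (fun M : 'M[int]_n => M i k) hskew; rewrite !mxE => ->.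
by rewrite eq_sym; ring.
Qed.

Lemma SW_add x y x' y' : SW x y + SW x' y' = SW (x + x') (y + y').
Proof. by rewrite /SW scalerDl raddfD /=; rewrite addrACA. Qed.

Lemma SW_scale (t x y : int) : t *: SW x y = SW (t * x) (t * y).
Proof. by rewrite /SW scalerDr scalerA scale_scalar_mx. Qed.

Lemma SW0 x : SW x 0 = x%:M.
Proof. by rewrite /SW scale0r addr0. Qed.

Lemma SW00 : SW 0 0 = 0.
Proof. by rewrite SW0; apply/matrixP => i k; rewrite !mxE mul0rn. Qed.

Lemma Gi_SW : Gi = row_mx (SW 1 0) (SW 2 1).
Proof. by rewrite /Gi SW0 /SW scale1r addrC. Qed.

Definition Bint (a b c d : int) : 'M[int]_(n + n) :=
  block_mx (SW a b) (SW c d) (SW (- c) d) (SW a (- b)).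

Lemma hmZ : (m%:Z) = 8 * jj - 5.
Proof. by have := hm5; lia. Qed.

Lemma Bint_dec (a b c d p q : int) : c = 2 * a + b + 4 * p -> d = a + 2 * b + 4 * q ->
  Bint a b c d = col_mx (SW a b) (SW (- c) d) *m Gi +
    4 *: col_mx (row_mx 0 (SW ((2 * jj - 1) * b + p) q))
                (row_mx 0 (SW (2 * jj * a + (4 * jj - 2) * b + 2 * p + m%:Z * q)
                              (p - b - 2 * q))).
Proof.
move=> hc hd.
rewrite /Bint block_mxEv mul_col_mx scale_col_mx add_col_mx Gi_SW !mul_mx_row.
rewrite !scale_row_mx !add_row_mx !scaler0 -SW00 !SW_mul !SW_scale !SW_add.
by congr col_mx; congr row_mx; congr SW; rewrite ?hc ?hd ?hmZ; ring.
Qed.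

Lemma BBt (a b c d : int) :
  Bint a b c d *m (Bint a b c d)^T = (a ^+ 2 + m%:Z * b ^+ 2 + c ^+ 2 + m%:Z * d ^+ 2)%:M.
Proof.
rewrite /Bint tr_block_mx mulmx_block !SW_tr !SW_mul !SW_add.
rewrite [RHS](scalar_mx_block n n) -SW00 -SW0.
by congr block_mx; congr SW; ring.
Qed.

Section Lat.
Variable R : realType.

Notation ir := (fun t : int => t%:~R : R).

Lemma sqrt4 : Num.sqrt (4%:R : R) = 2.
Proof.
have -> : (4%:R : R) = 2 ^+ 2 by rewrite expr2 -natrM.
by rewrite sqrtr_sqr ger0_norm.
Qed.

Lemma AkE (v : 'rV[R]_(n + n)) :
  Ak R (C4t W) v <-> exists w, Lint w /\ v = 2^-1 *: map_mx ir w.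
Proof.
split.
  case=> c hc [z ->].
  exists (map_mx (@rho 4) c + 4%:Z *: z); split; last by rewrite sqrt4.
  apply/c4_Lint.
  have -> : map_mx c4 (map_mx (@rho 4) c + 4%:Z *: z) = c => //.
  apply/matrixP => i l.
  by rewrite [LHS]mxE mxDE mxZE [map_mx _ _ _ _]mxE addrC mulrC c4_mul4 c4_lift.
move=> [w [hw ->]].
exists (map_mx c4 w); first by apply/c4_Lint.
exists (\matrix_(i, l) ((w i l - rho (c4 (w i l))) %/ 4)%Z).
rewrite sqrt4; congr (_ *: map_mx _ _).
apply/matrixP => i l.
rewrite mxDE mxZE [map_mx _ _ _ _]mxE [X in _ = _ + _ * X]mxE mulrC divzK.
  by rewrite mxE addrC subrK.
apply: (c4_dvd (w i l - rho (c4 (w i l)))).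
by rewrite /c4 rmorphB /= -/(c4 (w i l)) -/(c4 (rho _)) /rho c4_lift subrr.
Qed.

Lemma rdotE (w w' : 'rV[int]_(n + n)) :
  rdot (2^-1 *: map_mx ir w) (2^-1 *: map_mx ir w') =
  4^-1 * ((w *m w'^T) ord0 ord0)%:~R.
Proof.
rewrite /rdot !mxE rmorph_sum mulr_sumr; apply: eq_bigr => l _.
rewrite !mxE rmorphM /=.
have -> : (4 : R) = 2 * 2 by rewrite -natrM.
by field.
Qed.

Lemma even_L : even_lattice (Ak R (C4t W)).
Proof.
move=> x /AkE [w [hw ->]].
have/dvdzP [q hq] := Lint_norm w hw.
exists q; rewrite rdotE hq !rmorphM /= -!pmulrn.
have -> : (8 : R) = 2 * 2 * 2 by rewrite -!natrM.
by field.
Qed.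

Lemma unimod_L : unimodular (Ak R (C4t W)).
Proof.
move=> y; split.
  move/AkE=> [w' [hw' ->]] x /AkE [w [hw ->]].
  have/dvdzP [q hq] := Lint_dot w w' hw hw'.
  exists q; rewrite rdotE hq !rmorphM /= -!pmulrn.
  by field.
move=> hy.
have hk : forall i, exists k : int, y ord0 i = 2^-1 * k%:~R.
  move=> i.
  have hx : Ak R (C4t W) (2^-1 *: map_mx ir (4 *: delta_mx ord0 i)).
    apply/AkE; exists (4 *: delta_mx ord0 i); split => //.
    by exists 0, (delta_mx ord0 i); rewrite mul0mx add0r.
  have [k hk] := hy _ hx; exists k; rewrite -hk.
  have -> : (2^-1 *: map_mx ir (4 *: delta_mx ord0 i) : 'rV[R]_(n + n))
      = 2 *: delta_mx ord0 i.
    apply/matrixP => a l; rewrite !mxE rmorphM /= rmorph_nat.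
    case: (_ && _) => /=; rewrite ?rmorph1 ?rmorph0 ?mulr0 ?mulr1 //.
    have -> : (4 : R) = 2 * 2 by rewrite -natrM.
    by field.
  rewrite /rdot -scalemxAl -rowE !mxE.
  by field.
have [kf hkf] := fin_all_exists hk.
pose kv := \row_i kf i.
have hyk : y = 2^-1 *: map_mx ir kv.
  by apply/matrixP => a l; rewrite (ord1 a) hkf !mxE.
apply/AkE; exists kv; split => //.
apply: Lint_of_dual => i.
have hx : Ak R (C4t W) (2^-1 *: map_mx ir (row i Gi)).
  apply/AkE; exists (row i Gi); split => //.
  by exists (delta_mx 0 i), 0; rewrite scaler0 addr0 rowE.
have [q hq] := hy _ hx; rewrite hyk rdotE in hq.
have hX : (row i Gi *m kv^T) ord0 ord0 = q * 4.
  apply: (@intr_inj R); rewrite rmorphM /= -hq -!pmulrn.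
  by field.
apply/dvdzP; exists q; rewrite -hX !mxE.
by apply: eq_bigr => l _; rewrite !mxE mulrC.
Qed.

Lemma evenunimod : even_unimodular (Ak R (C4t W)).
Proof. split; [exact: even_L | exact: unimod_L]. Qed.

Lemma Ft_eq a b c d : Ft R W a b c d = 2^-1 *: map_mx ir (Bint a b c d).
Proof.
rewrite /Ft /Bint map_block_mx; congr (_ *: _); congr block_mx;
  apply/matrixP => i k; rewrite !mxE; case: (i == k) => /=;
  rewrite ?mulr1n ?mulr0n ?mulr1 ?mulr0 ?rmorphD ?rmorphN ?rmorphM ?rmorph0 /=; ring.
Qed.

Lemma rowDz p q (A B : 'M[int]_(p, q)) i : row i (A + B) = row i A + row i B.
Proof. by apply/matrixP => x y; rewrite !mxE. Qed.
Lemma rowZz p q (t : int) (A : 'M[int]_(p, q)) i : row i (t *: A) = t *: row i A.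
Proof. by apply/matrixP => x y; rewrite !mxE. Qed.
Lemma rowZm p q (A : 'M[int]_(p, q)) i :
  row i (2^-1 *: map_mx ir A) = 2^-1 *: map_mx ir (row i A).
Proof. by apply/matrixP => x y; rewrite !mxE. Qed.

Lemma rowdot p q (B : 'M[int]_(p, q)) i j :
  (row i B *m (row j B)^T) ord0 ord0 = (B *m B^T) i j.
Proof. by rewrite !mxE; apply: eq_bigr => l _; rewrite !mxE. Qed.

Lemma frame_L a b c d p q : c = 2 * a + b + 4 * p -> d = a + 2 * b + 4 * q ->
  is_frame (Ak R (C4t W))
        (4%:R^-1 * (a%:~R ^+ 2 + m%:R * b%:~R ^+ 2 + c%:~R ^+ 2
                    + m%:R * d%:~R ^+ 2))
        (fun i => row i (Ft R W a b c d)).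
Proof.
move=> hc hd; split.
  move=> i; rewrite Ft_eq rowZm; apply/AkE; exists (row i (Bint a b c d)); split => //.
  rewrite (Bint_dec a b c d p q hc hd) rowDz rowZz row_mul.
  by eexists; eexists.
move=> i j; rewrite Ft_eq !rowZm rdotE rowdot BBt mxE.
case: (i == j) => /=; last by rewrite mulr0n rmorph0 mulr0.
rewrite mulr1n !(rmorphD, rmorphM, rmorphXn) /= -!pmulrn.
by [].
Qed.

End Lat.
End IntAlg.

Theorem proposition3p3 (R : realType) (n m : nat) (W : 'M[int]_n)
    (a b c d : int) :
  (n %% 4 = 0)%N -> (m %% 8 = 3)%N ->
  skew_weighing m W ->
  (c = 2 * a + b %[mod 4])%Z -> (d = a + 2 * b %[mod 4])%Z ->
  [/\ typeII_Z4 (C4t W),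
      even_unimodular (Ak R (C4t W)) &
      is_frame (Ak R (C4t W))
        (4%:R^-1 * (a%:~R ^+ 2 + m%:R * b%:~R ^+ 2 + c%:~R ^+ 2
                    + m%:R * d%:~R ^+ 2))
        (fun i => row i (Ft R W a b c d))].
Proof.
move=> _ hm [_ hskew hWWt] hc hd.
have [p hp] : exists p, c = 2 * a + b + 4 * p.
  by exists ((c - (2 * a + b)) %/ 4)%Z; lia.
have [q hq] : exists q, d = a + 2 * b + 4 * q.
  by exists ((d - (a + 2 * b)) %/ 4)%Z; lia.
split.
- split; first exact: (selfdual _ _ _ hskew hWWt hm).
  by move=> x; apply: (weight8 _ _ _ hskew hWWt hm).
- exact: (evenunimod _ _ _ hskew hWWt hm R).
- exact: (frame_L _ _ _ hskew hWWt hm R _ _ _ _ _ _ hp hq).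
Qed.
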